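(* Let $d\ge1$, $T\ge1$, $\tau\in\{1,\dots,T\}$, learning rates $\eta_t>0$ and batch sizes $n_t\ge1$ with $n_\tau\ge2$. Let $\mu_g:\mathbb{R}^d\to\mathbb{R}^d$ and $\Sigma_g:\mathbb{R}^d\to\mathbb{R}^{d\times d}$ with $\Sigma_g(\theta)$ positive definite for all $\theta$, and let $\ell(\theta;x)$ be a differentiable loss and $z^*$ a fixed target data point. Consider two probability models for a parameter trajectory $(\theta_0,\theta_1,\dots,\theta_T)$ in $\mathbb{R}^d$, in both of which $\theta_0$ has the same distribution and the trajectory is a Markov chain: under $\mathbf{H_0}$, for every $t$, \[ \theta_t\mid\theta_{t-1}\sim\mathcal{N}\Big(\theta_{t-1}-\eta_t\mu_g(\theta_{t-1}),\ \tfrac{\eta_t^2\Sigma_g(\theta_{t-1})}{n_t}\Big); \] under $\mathbf{H_1^\tau}$ the same transition holds for $t\neq\tau$, while \[ \theta_\tau\mid\theta_{\tau-1}\sim\mathcal{N}\Big(\theta_{\tau-1}-\eta_\tau\frac{(n_\tau-1)\mu_g(\theta_{\tau-1})+\nabla_\theta\ell(\theta_{\tau-1};z^* )}{n_\tau},\ \frac{\eta_\tau^2(n_\tau-1)\Sigma_g(\theta_{\tau-1})}{n_\tau^2}\Big). \] Let $\mu_g=\mu_g(\theta_{\tau-1})$, $\Sigma_g=\Sigma_g(\theta_{\tau-1})$, $\delta_g=\nabla_\theta\ell(\theta_{\tau-1};z^* )-\mu_g$, $N=\theta_\tau-\theta_{\tau-1}+\eta_\tau\mu_g$ and $m^*=\delta_g^\top\Sigma_g^{-1}\delta_g$.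 Then the log of the ratio of the joint density of $(\theta_0,\dots,\theta_T)$ under $\mathbf{H_1^\tau}$ to that under $\mathbf{H_0}$ is \[ \log\mathrm{LR}=-\frac d2\log\Big(\frac{n_\tau-1}{n_\tau}\Big)-\frac{n_\tau}{2(n_\tau-1)\eta_\tau^2}N^\top\Sigma_g^{-1}N-\frac{n_\tau}{(n_\tau-1)\eta_\tau}N^\top\Sigma_g^{-1}\delta_g-\frac{m^*}{2(n_\tau-1)}. \]
   Context: This models (stochastic) gradient descent $\theta_t=\theta_{t-1}-\eta_tg_t$ where the batch gradient $g_t$ on $n_t$ points is assumed Gaussian with mean $\mu_g(\theta_{t-1})$ and covariance $\Sigma_g(\theta_{t-1})/n_t$ given $\theta_{t-1}$; under $\mathbf{H_1^\tau}$ one point of batch $\tau$ is replaced by the target $z^*$. *)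

(* Defs.v *)
From HB Require Import structures.
From mathcomp Require Import all_boot all_order all_algebra.
From mathcomp Require Import all_classical all_reals all_analysis.
Set Implicit Arguments. Unset Strict Implicit. Unset Printing Implicit Defensive.
Import Order.TTheory GRing.Theory Num.Theory.
Import numFieldNormedType.Exports.
Local Open Scope ring_scope.

Definition qform (R : realType) (d : nat) (x : 'rV[R]_d) (A : 'M[R]_d) : R :=
  (x *m A *m x^T) 0 0.

Definition bform (R : realType) (d : nat) (x : 'rV[R]_d) (A : 'M[R]_d) (y : 'rV[R]_d) : R :=
  (x *m A *m y^T) 0 0.

Definition posdef (R : realType) (d : nat) (S : 'M[R]_d) : Prop :=
  S^T = S /\ forall x : 'rV[R]_d, x != 0 -> 0 < qform x S.

Definition gauss_pdf (R : realType) (d : nat) (m : 'rV[R]_d) (S : 'M[R]_d) (x : 'rV[R]_d) : R :=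
  (Num.sqrt ((2 * pi) ^+ d * \det S))^-1 * expR (- (qform (x - m) (invmx S)) / 2).

Definition grad (R : realType) (d : nat) (f : 'rV[R]_d -> R) (th : 'rV[R]_d) : 'rV[R]_d :=
  \row_(i < d) ('D_(delta_mx 0 i) f th).

Definition kernel_H0 (R : realType) (d : nat) (eta : nat -> R) (n : nat -> nat)
  (mu_g : 'rV[R]_d -> 'rV[R]_d) (Sigma_g : 'rV[R]_d -> 'M[R]_d)
  (t : nat) (prev next : 'rV[R]_d) : R :=
  gauss_pdf (prev - eta t *: mu_g prev)
            (((eta t) ^+ 2 / (n t)%:R) *: Sigma_g prev) next.

Definition kernel_H1_tau (R : realType) (d : nat) (eta : nat -> R) (n : nat -> nat)
  (mu_g : 'rV[R]_d -> 'rV[R]_d) (Sigma_g : 'rV[R]_d -> 'M[R]_d)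
  (gradl : 'rV[R]_d -> 'rV[R]_d) (t : nat) (prev next : 'rV[R]_d) : R :=
  gauss_pdf (prev - eta t *: (((n t)%:R)^-1 *: (((n t).-1)%:R *: mu_g prev + gradl prev)))
            (((eta t) ^+ 2 * ((n t).-1)%:R / ((n t)%:R ^+ 2)) *: Sigma_g prev) next.

Definition joint_H0 (R : realType) (d : nat) (T : nat) (p0 : 'rV[R]_d -> R)
  (eta : nat -> R) (n : nat -> nat)
  (mu_g : 'rV[R]_d -> 'rV[R]_d) (Sigma_g : 'rV[R]_d -> 'M[R]_d)
  (theta : nat -> 'rV[R]_d) : R :=
  p0 (theta 0%N) *
  \prod_(1 <= t < T.+1) kernel_H0 eta n mu_g Sigma_g t (theta t.-1) (theta t).

Definition joint_H1 (R : realType) (d : nat) (T tau : nat) (p0 : 'rV[R]_d -> R)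
  (eta : nat -> R) (n : nat -> nat)
  (mu_g : 'rV[R]_d -> 'rV[R]_d) (Sigma_g : 'rV[R]_d -> 'M[R]_d)
  (gradl : 'rV[R]_d -> 'rV[R]_d)
  (theta : nat -> 'rV[R]_d) : R :=
  p0 (theta 0%N) *
  \prod_(1 <= t < T.+1)
     (if t == tau then kernel_H1_tau eta n mu_g Sigma_g gradl t (theta t.-1) (theta t)
      else kernel_H0 eta n mu_g Sigma_g t (theta t.-1) (theta t)).

(* Main.v *)
Require Import Defs.
From HB Require Import structures.
From mathcomp Require Import all_boot all_order all_algebra.
From mathcomp Require Import all_classical all_reals all_analysis.
From mathcomp Require Import ring lra.
Import Order.TTheory GRing.Theory Num.Theory.
Import numFieldNormedType.Exports.
Local Open Scope ring_scope.

Lemma qform_id_gt0 (R : realType) (d : nat) (v : 'rV[R]_d) :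
  v != 0 -> 0 < (v *m v^T) 0 0.
Proof.
move=> vN0; rewrite mxE.
have [j vj] : exists j, v 0 j != 0.
  apply/existsP; apply: contraR vN0 => /existsPn H.
  apply/eqP/rowP => j; rewrite mxE; apply/eqP; move: (H j); by rewrite negbK.
rewrite (bigD1 j) //= ltr_pwDl //.
  by rewrite mxE -expr2 lt_def sqr_ge0 andbT sqrf_eq0 vj.
apply: sumr_ge0 => i _; rewrite mxE -expr2; exact: sqr_ge0.
Qed.

Lemma entry_lin (R : realType) (t c : R) (A B : 'M[R]_1) :
  (t *: A + c *: B) 0 0 = t * A 0 0 + c * B 0 0.
Proof. by rewrite !mxE. Qed.

Lemma posdef_det_neq0 (R : realType) (d : nat) (t : R) (S : 'M[R]_d) :
  posdef S -> 0 <= t <= 1 -> \det (t *: S + (1 - t) *: 1%:M) != 0.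
Proof.
move=> [_ PS] /andP[t0 t1]; apply/negP => /det0P [v vN0 vM].
have : (v *m (t *: S + (1 - t) *: 1%:M) *m v^T) 0 0 = 0 by rewrite vM mul0mx mxE.
have E2 : v *m (t *: S + (1 - t) *: 1%:M) *m v^T = t *: (v *m S *m v^T) + (1-t) *: (v *m v^T).
  by rewrite mulmxDr mulmxDl -!scalemxAr !scalemxAl mulmx1.
rewrite E2 entry_lin.
have h1 := qform_id_gt0 _ _ _ vN0.
have h2 := PS v vN0; rewrite /qform in h2.
move=> E.
have [tz|tpos] := eqVneq t 0.
  by move: E; rewrite tz mul0r add0r subr0 mul1r => E; rewrite E ltxx in h1.
have p1 : 0 < t * (v *m S *m v^T) 0 0.
  by apply: mulr_gt0 => //; rewrite lt_def tpos.
have p2 : 0 <= (1 - t) * (v *m v^T) 0 0.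
  by apply: mulr_ge0; rewrite ?subr_ge0 // ltW.
move: E p1 p2; set x := t * _; set y := _ * _; lra.
Qed.
Lemma posdef_det_gt0 (R : realType) (d : nat) (S : 'M[R]_d) :
  posdef S -> 0 < \det S.
Proof.
move=> PS.
pose P : 'M[{poly R}]_d := \matrix_(i, j) ((S i j)%:P * 'X + ((i == j)%:R)%:P * (1 - 'X)).
have ev t : (\det P).[t] = \det (t *: S + (1 - t) *: 1%:M).
  rewrite -horner_evalE -det_map_mx; congr (\det _); apply/matrixP => i j.
  by rewrite !mxE /= horner_evalE !hornerE mulrC [_ * (1 - t)]mulrC.
have hd y : 0 <= y <= 1 -> (\det P).[y] != 0 by move=> hy; rewrite ev posdef_det_neq0.
have e0 : (\det P).[0] = 1 by rewrite ev scale0r add0r subr0 scale1r det1.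
have e1 : (\det P).[1] = \det S by rewrite ev subrr scale0r addr0 scale1r.
rewrite lt_def; apply/andP; split; first by rewrite -e1 hd // ler01 lexx.
rewrite leNgt; apply/negP => neg.
have h01 : (- \det P).[0] <= 0 <= (- \det P).[1].
  by rewrite !hornerN e0 e1 oppr_le0 ler01 oppr_ge0 ltW.
have [x /andP[x0 x1]] := @poly_ivt _ (- \det P) 0 1 ler01 h01.
by rewrite /root hornerN oppr_eq0 (negbTE (hd x _)) // x0 x1.
Qed.

Lemma qformZ (R : realType) (d : nat) (x : 'rV[R]_d) (c : R) (A : 'M[R]_d) :
  qform x (c *: A) = c * qform x A.
Proof.
have e (M : 'M[R]_1) : (c *: M) 0 0 = c * M 0 0 by rewrite mxE.
by rewrite /qform -scalemxAr -scalemxAl e.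
Qed.

Lemma ln_sqrt (R : realType) (a : R) : 0 < a -> ln (Num.sqrt a) = ln a / 2.
Proof.
move=> a0; have s0 : 0 < Num.sqrt a by rewrite sqrtr_gt0.
by rewrite -{2}(sqr_sqrtr (ltW a0)) lnXn // mulr2n; field.
Qed.

Lemma ln_gauss (R : realType) (d : nat) (m x : 'rV[R]_d) (c : R) (S : 'M[R]_d) :
  0 < c -> posdef S ->
  ln (gauss_pdf m (c *: S) x) =
  - (ln ((2 * pi) ^+ d) + d%:R * ln c + ln (\det S)) / 2
  - c^-1 * qform (x - m) (invmx S) / 2.
Proof.
move=> c0 PS; have D0 := posdef_det_gt0 _ _ _ PS.
have p0 : 0 < (2 * pi) ^+ d :> R by rewrite exprn_gt0 // mulr_gt0 // pi_gt0.
have cd : 0 < c ^+ d by rewrite exprn_gt0.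
have A0 : 0 < (2 * pi) ^+ d * \det (c *: S) by rewrite detZ !mulr_gt0.
have U : c *: S \in unitmx by rewrite unitmxE unitfE detZ mulf_neq0 // gt_eqF.
rewrite /gauss_pdf lnM ?posrE ?invr_gt0 ?sqrtr_gt0 ?expR_gt0 // expRK lnV ?posrE ?sqrtr_gt0 //.
rewrite ln_sqrt // invmxZ // qformZ detZ !lnM ?posrE ?mulr_gt0 // (lnXn _ c0) -mulr_natl.
by field; rewrite gt_eqF.
Qed.

Lemma bform_sym (R : realType) (d : nat) (u v : 'rV[R]_d) (A : 'M[R]_d) :
  A^T = A -> bform u A v = bform v A u.
Proof.
move=> sA; have t (M : 'M[R]_1) : M 0 0 = M^T 0 0 by rewrite mxE.
by rewrite /bform [LHS]t !trmx_mul trmxK sA mulmxA.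
Qed.

Lemma qform_add (R : realType) (d : nat) (u v : 'rV[R]_d) (a : R) (A : 'M[R]_d) :
  qform (u + a *: v) A = qform u A + a * bform u A v + a * bform v A u + a ^+ 2 * qform v A.
Proof.
have e (M N : 'M[R]_1) : (M + N) 0 0 = M 0 0 + N 0 0 by rewrite mxE.
have e2 (c : R) (M : 'M[R]_1) : (c *: M) 0 0 = c * M 0 0 by rewrite mxE.
rewrite /qform /bform linearD linearZ /= mulmxDl mulmxDr mulmxDl.
rewrite mulmxDl -!scalemxAr -!scalemxAl !e !e2; ring.
Qed.

Lemma gauss_pos (R : realType) (d : nat) (m x : 'rV[R]_d) (c : R) (S : 'M[R]_d) :
  0 < c -> posdef S -> 0 < gauss_pdf m (c *: S) x.
Proof.
move=> c0 PS; have D0 := posdef_det_gt0 _ _ _ PS.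
rewrite /gauss_pdf mulr_gt0 ?expR_gt0 // invr_gt0 sqrtr_gt0 detZ.
have p0 : 0 < (2 * pi) ^+ d :> R by rewrite exprn_gt0 // mulr_gt0 // pi_gt0.
by rewrite mulr_gt0 // mulr_gt0 // exprn_gt0.
Qed.


Lemma ratio_simp (R : realType) (p a b r : R) : p != 0 -> r != 0 -> b != 0 ->
  p * (a * r) / (p * (b * r)) = a / b.
Proof. by move=> p0 r0 b0; field; rewrite p0 r0 b0. Qed.

Local Opaque gauss_pdf.
Lemma main_ln (R : realType) (d : nat) (th1 th0 mu g : 'rV[R]_d) (S : 'M[R]_d) (e : R) (nn : nat) :
  posdef S -> 0 < e -> (2 <= nn)%N ->
  ln (gauss_pdf (th0 - e *: (nn%:R^-1 *: (nn.-1%:R *: mu + g))) ((e ^+ 2 * nn.-1%:R / nn%:R ^+ 2) *: S) th1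
      / gauss_pdf (th0 - e *: mu) ((e ^+ 2 / nn%:R) *: S) th1)
  = - (d%:R / 2) * ln ((nn%:R - 1) / nn%:R)
    - nn%:R / (2 * (nn%:R - 1) * e ^+ 2) * qform (th1 - th0 + e *: mu) (invmx S)
    - nn%:R / ((nn%:R - 1) * e) * bform (th1 - th0 + e *: mu) (invmx S) (g - mu)
    - qform (g - mu) (invmx S) / (2 * (nn%:R - 1)).
Proof.
move=> PS e0 n2.
set N := th1 - th0 + e *: mu; set delta := g - mu; set nt : R := nn%:R.
have n1 : 1 < nt by rewrite /nt ltr1n.
have nt0 : 0 < nt by rewrite (lt_trans ltr01).
have pn : (nn.-1)%:R = nt - 1 :> R by rewrite -subn1 natrB // ltnW.
have c1pos : 0 < e ^+ 2 * (nn.-1)%:R / nt ^+ 2.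
  by rewrite pn divr_gt0 ?exprn_gt0 ?mulr_gt0 ?subr_gt0.
have c0pos : 0 < e ^+ 2 / nt by rewrite divr_gt0 ?exprn_gt0.
rewrite ln_div ?posrE ?gauss_pos //.
rewrite [in X in X = _](ln_gauss _ _ _ _ _ _ c1pos PS) [in X in X = _](ln_gauss _ _ _ _ _ _ c0pos PS).
have v0 : th1 - (th0 - e *: mu) = N by apply/rowP => j; rewrite !mxE; ring.
have v1 : th1 - (th0 - e *: (nt^-1 *: ((nn.-1)%:R *: mu + g))) = N + (e / nt) *: delta.
  by apply/rowP => j; rewrite !mxE pn; field; rewrite (gt_eqF nt0).
have sI : (invmx S)^T = invmx S by rewrite trmx_inv (proj1 PS).
rewrite v0 v1 qform_add (bform_sym _ _ delta N _ sI).
have lc : ln (e ^+ 2 * (nn.-1)%:R / nt ^+ 2) = ln (e ^+ 2 / nt) + ln ((nt - 1) / nt).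
  rewrite -lnM ?posrE ?divr_gt0 ?subr_gt0 ?exprn_gt0 //; congr ln; rewrite pn; field.
  by rewrite gt_eqF.
rewrite lc pn.
set qN := qform N _; set bN := bform N _ _; set qd := qform delta _.
set l0 := ln (_ / nt); set lr := ln ((nt - 1) / nt).
field.
by rewrite subr_eq0 (gt_eqF n1) (gt_eqF e0) (gt_eqF nt0).
Qed.

Theorem theorem4p1 (R : realType) (d T tau : nat) (X : Type)
  (eta : nat -> R) (n : nat -> nat)
  (mu_g : 'rV[R]_d -> 'rV[R]_d) (Sigma_g : 'rV[R]_d -> 'M[R]_d)
  (loss : 'rV[R]_d -> X -> R) (zstar : X)
  (p0 : 'rV[R]_d -> R) (theta : nat -> 'rV[R]_d) :
  (1 <= d)%N -> (1 <= T)%N -> (1 <= tau <= T)%N ->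
  (forall t, (1 <= t <= T)%N -> 0 < eta t) ->
  (forall t, (1 <= t <= T)%N -> (1 <= n t)%N) ->
  (2 <= n tau)%N ->
  (forall th, posdef (Sigma_g th)) ->
  (forall th, differentiable (fun th' => loss th' zstar) th) ->
  (forall th, 0 <= p0 th) ->
  0 < p0 (theta 0%N) ->
  let gradl := grad (fun th' => loss th' zstar) in
  let mu := mu_g (theta tau.-1) in
  let Sig := Sigma_g (theta tau.-1) in
  let delta := gradl (theta tau.-1) - mu in
  let N := theta tau - theta tau.-1 + eta tau *: mu in
  let mstar := qform delta (invmx Sig) in
  let nt := (n tau)%:R : R in
  let et := eta tau in
  ln (joint_H1 T tau p0 eta n mu_g Sigma_g gradl theta /
      joint_H0 T p0 eta n mu_g Sigma_g theta)
  = - (d%:R / 2) * ln ((nt - 1) / nt)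
    - nt / (2 * (nt - 1) * et ^+ 2) * qform N (invmx Sig)
    - nt / ((nt - 1) * et) * bform N (invmx Sig) delta
    - mstar / (2 * (nt - 1)).
Proof.
move=> d1 T1 /andP[tau1 tauT] etapos npos n2 PD _ _ p0pos.
move=> gradl mu Sig delta N mstar nt et.
pose k0 t := kernel_H0 eta n mu_g Sigma_g t (theta t.-1) (theta t).
pose k1 := kernel_H1_tau eta n mu_g Sigma_g gradl tau (theta tau.-1) (theta tau).
have k0pos t : (1 <= t <= T)%N -> 0 < k0 t.
  move=> ht; apply: gauss_pos => //.
  rewrite divr_gt0 //; first by rewrite exprn_gt0 // etapos.
  by rewrite ltr0n npos.
have taur : tau \in index_iota 1 T.+1 by rewrite mem_index_iota tau1 ltnS.
pose Rest := \prod_(t <- index_iota 1 T.+1 | t != tau) k0 t.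
have RestP : 0 < Rest.
  rewrite /Rest big_seq_cond; apply: prodr_gt0 => t /andP[].
  by rewrite mem_index_iota ltnS => /k0pos.
have eH0 : joint_H0 T p0 eta n mu_g Sigma_g theta = p0 (theta 0%N) * (k0 tau * Rest).
  by rewrite /joint_H0 (bigD1_seq tau taur (iota_uniq _ _)).
have eH1 : joint_H1 T tau p0 eta n mu_g Sigma_g gradl theta = p0 (theta 0%N) * (k1 * Rest).
  rewrite /joint_H1 (bigD1_seq tau taur (iota_uniq _ _)) eqxx.
  congr (_ * (_ * _)).
  by apply: eq_bigr => t /negbTE ->.
have k0t : 0 < k0 tau by apply: k0pos; rewrite tau1 tauT.
have et0 : 0 < et by apply: etapos; rewrite tau1 tauT.
rewrite eH1 eH0.
rewrite (@ratio_simp _ _ _ _ _ (lt0r_neq0 p0pos) (lt0r_neq0 RestP) (lt0r_neq0 k0t)).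
exact: (@main_ln _ _ (theta tau) (theta tau.-1) (mu_g (theta tau.-1)) (gradl (theta tau.-1))
          (Sigma_g (theta tau.-1)) (eta tau) (n tau) (PD _) et0 n2).
Qed.
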